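(* Let $\Omega\subset\mathbb{R}^2$ and let $\Omega^\diamond=\{(p,q)\in\mathbb{R}^{2*}\mid px-qy\ge1\ \forall(x,y)\in\Omega\}$ be its antipolar set. Let $\gamma\colon(-1,1)\to\mathbb{R}^{2*}$ be a continuously differentiable curve such that \[ \gamma(0)=\omega^\diamond\in\Omega^\diamond, \qquad \dot{\gamma}(0)\notin\{\lambda\omega^\diamond\mid \lambda\in\mathbb{R}\}. \] Assume that there exists $\delta>0$ such that for every $\alpha\in(0,\delta)$ \begin{enumerate} \item[---] $(1-\alpha)\omega^\diamond\in\Omega^\diamond,$ \item[---] $\gamma(-\alpha)\in\Omega^\diamond,\quad\gamma(\alpha)\in\Omega^\diamond$. \end{enumerate} Then $\omega^\diamond\in\mathrm{int}\,\Omega^\diamond$. Conversely, if there is a continuously differentiable curve $\gamma\colon(-1,1)\to\mathbb{R}^{2*}$ with $\gamma(0)=\omega^\diamond$ and $\dot{\gamma}(0)\notin\{\lambda\omega^\diamond\mid \lambda\in\mathbb{R}\}$ for which no such $\delta>0$ exists, then the point $\omega^\diamond$ lies on the boundary $\partial\Omega^\diamond$ of the antipolar set.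
   Context: $\Omega\subset\mathbb{R}^2$ is a non-empty, convex, closed set not containing the origin and satisfying the ray property $\lambda\Omega\subset\Omega$ for all $\lambda>1$ (Assumption (i)), and $\Omega$ is strictly separated from the origin, so that its antipolar set $\Omega^\diamond=\{(p,q)\in\mathbb{R}^{2*}\mid px-qy\ge1\ \forall(x,y)\in\Omega\}$ is non-empty, convex and closed and also satisfies Assumption (i). Here $\mathbb{R}^{2*}$ is the dual space of $\mathbb{R}^2$. *)

(* Defs.v *)
From HB Require Import structures.
From mathcomp Require Import all_boot all_order all_algebra.
From mathcomp Require Import all_classical all_reals all_analysis.
Set Implicit Arguments. Unset Strict Implicit. Unset Printing Implicit Defensive.
Import Order.TTheory GRing.Theory Num.Theory.
Import numFieldNormedType.Exports.
Local Open Scope classical_set_scope.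
Local Open Scope ring_scope.

(* Points of R^2 and of its dual R^{2*} are both represented as pairs in R * R.
   The duality pairing is <(p,q),(x,y)> = p x - q y, as in the paper. *)

Definition antipolar (R : realType) (Om : set (R * R)) : set (R * R) :=
  [set pq | forall xy, Om xy -> 1 <= pq.1 * xy.1 - pq.2 * xy.2].

Definition convex_set2 (R : realType) (A : set (R * R)) : Prop :=
  forall a b t, A a -> A b -> 0 <= t -> t <= 1 ->
    A (t * a.1 + (1 - t) * b.1, t * a.2 + (1 - t) * b.2).

Definition ray_property (R : realType) (A : set (R * R)) : Prop :=
  forall lam a, 1 < lam -> A a -> A (lam * a.1, lam * a.2).

(* strict separation from the origin by a line: some linear functional is
   >= 1 on A (equivalently >= c > 0 after rescaling), while it is 0 at 0 *)
Definition strictly_separated_from_origin (R : realType) (A : set (R * R)) : Prop :=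
  exists pq : R * R, forall xy, A xy -> 1 <= pq.1 * xy.1 - pq.2 * xy.2.

Definition boundary (T : topologicalType) (A : set T) : set T :=
  closure A `\` interior A.

Definition C1_on_unit (R : realType) (g : R -> R * R) : Prop :=
  (forall t, -1 < t < 1 -> derivable g t 1) /\
  (forall t, -1 < t < 1 -> {for t, continuous (fun s => 'D_1 g s)}).

Definition not_collinear (R : realType) (d w : R * R) : Prop :=
  ~ (exists lam : R, d = (lam * w.1, lam * w.2)).

Definition good_delta (R : realType) (Om : set (R * R)) (g : R -> R * R) (w : R * R) : Prop :=
  exists2 delta : R, 0 < delta &
    forall alpha, 0 < alpha < delta ->
      [/\ antipolar Om ((1 - alpha) * w.1, (1 - alpha) * w.2),
          antipolar Om (g (- alpha)) & antipolar Om (g alpha)].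

(* Main.v *)
Require Import Defs.
From HB Require Import structures.
From mathcomp Require Import all_boot all_order all_algebra.
From mathcomp Require Import all_classical all_reals all_analysis.
From mathcomp Require Import ring lra.
Import Order.TTheory GRing.Theory Num.Theory.
Import numFieldNormedType.Exports.
Local Open Scope classical_set_scope.
Local Open Scope ring_scope.

Definition lin {R : realType} (a b : R) (P : R * R) := a * P.1 + b * P.2.

Lemma linDZ (R : realType) (a b h : R) (x y : R * R) :
  lin a b (x + h *: y) = lin a b x + h * lin a b y.
Proof. have E : forall u v : R, u *: v = u * v by []. rewrite /lin /= !E. ring. Qed.

Lemma lin_cont (R : realType) (a b : R) : continuous (lin a b).
Proof.
move=> P; apply: cvgD.
  apply: cvgMl_tmp. exact: cvg_fst.
apply: cvgMl_tmp. exact: cvg_snd.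
Qed.

Lemma derr (R : realType) (g : R -> R * R) : derivable g 0 1 ->
  (fun h => h^-1 *: (g h - g 0)) @ (0:R)^' --> 'D_1 g 0.
Proof.
move=> H.
have -> : (fun h => h^-1 *: (g h - g 0)) = (fun h => h^-1 *: ((g \o shift 0) (h *: 1) - g 0)).
  apply: funext => h /=. by rewrite addr0 /GRing.scale /= mulr1.
exact: H.
Qed.

Lemma near_ball {R : realType} (P : R -> Prop) :
  (\forall h \near (0:R)^', P h) -> exists2 e : R, 0 < e & forall h, 0 < `|h| < e -> P h.
Proof.
move=> /nbhs_ballP [e e0 He]; exists e => // h /andP[h0 he]; apply: He.
  by rewrite /ball /= sub0r normrN.
by rewrite -normr_gt0.
Qed.

Lemma arith (R : realType) (a F G cp tp cm tm cu tu : R) :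
  0 < a -> a < 1 -> 1 <= F -> 1 <= (1-a)*F ->
  -1 < cp -> cp < 1 -> 1/2 < tp -> -1 < cm -> cm < 1 -> 1/2 < tm ->
  1 <= (1 + a*cp)*F + (a*tp)*G -> 1 <= (1 + (-a)*cm)*F + ((-a)*tm)*G ->
  1 - a/2 < cu -> -(a^2/8) < tu -> tu < a^2/8 -> 1 <= cu*F + tu*G.
Proof.
move=> a0 a1 F1 Fa cp1 cp2 tp1 cm1 cm2 tm1 Hp Hm cu1 tu1 tu2.
have k1 : a*cp < 1 by nra.
have h1 : (1 + a*cp)*F < 2*F by nra.
have k2 : (-a)*cm < 1 by nra.
have h2 : (1 + (-a)*cm)*F < 2*F by nra.
have h3 : -4*F < a*G.
  case: (lerP 0 G) => G0; first nra.
  have aG : a*G < 0 by rewrite -(mulr0 a) ltr_pM2l.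
  have : (tp - 1/2) * (a*G) <= 0 by rewrite pmulr_rle0 ?ltW // subr_gt0.
  nra.
have h4 : a*G < 4*F.
  case: (lerP G 0) => G0; first nra.
  have aG : 0 < a*G by rewrite mulr_gt0.
  have : (tm - 1/2) * (a*G) >= 0 by rewrite mulr_ge0 ?ltW // subr_gt0.
  nra.
have h5 : - (a*F/2) <= tu * G.
  have e : tu * G * a = (tu) * (a*G) by ring.
  have : - (a*F/2) * a <= tu * G * a.
    rewrite e. 
    case: (lerP 0 tu) => t0.
      have : -(a^2/8) * (4*F) <= tu * (a*G) by nra.
      nra.
    have : (a^2/8) * (-4*F) <= tu * (a*G) by nra.
    nra.
  move=> H; rewrite -(ler_pM2r a0). exact: H.
nra.
Qed.

Lemma part1 (R : realType) (Om : set (R * R)) (w : R * R) (g : R -> R * R) :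
  Om !=set0 -> antipolar Om w -> C1_on_unit g -> g 0 = w -> not_collinear ('D_1 g 0) w ->
     good_delta Om g w -> interior (antipolar Om) w.
Proof.
move=> [x0 Ox0] Aw [Hder _] g0 ncol [del del0 Hdel].
have Hd : derivable g 0 1 by apply: Hder; rewrite ltrN10 ltr01.
pose d := 'D_1 g 0.
have wne : w != 0.
  apply/eqP => w0; have := Aw _ Ox0; rewrite w0 /= !mul0r subr0 ler10 //.
pose Dn := w.1 * d.2 - w.2 * d.1.
have Dn0 : Dn != 0.
  apply/eqP => HD; apply: ncol.
  case: (eqVneq w.1 0) => [w1|w1].
    have w2 : w.2 != 0.
      apply: contra wne => /eqP w2; apply/eqP.
      by rewrite [w]surjective_pairing w1 w2.
    exists (d.2 / w.2); apply: injective_projections => /=.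
      rewrite w1 mulr0. rewrite /Dn w1 mul0r sub0r in HD.
      apply/eqP; move: HD => /eqP; rewrite oppr_eq0 mulf_eq0 (negbTE w2) /=.
      exact: id.
    by rewrite divfK.
  exists (d.1 / w.1); apply: injective_projections => /=.
    by rewrite divfK.
  apply: (mulfI w1); rewrite /=.
  have E : w.1 * (d.1 / w.1 * w.2) = w.2 * d.1 by field.
  by rewrite E; apply/eqP; rewrite -subr_eq0; apply/eqP; exact: HD.
pose cs := lin (d.2 / Dn) (- (d.1 / Dn)).
pose ct := lin (- (w.2 / Dn)) (w.1 / Dn).
have key : forall xy P : R * R, P.1 * xy.1 - P.2 * xy.2 =
   cs P * (w.1 * xy.1 - w.2 * xy.2) + ct P * (d.1 * xy.1 - d.2 * xy.2).
  by move=> xy P; rewrite /cs /ct /lin /Dn; field.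
have csw : cs w = 1 by rewrite /cs /lin /Dn; field.
have ctw : ct w = 0 by rewrite /ct /lin /Dn; field.
have csd : cs d = 0 by rewrite /cs /lin /Dn; field.
have ctd : ct d = 1 by rewrite /ct /lin /Dn; field.
pose r := fun h : R => h^-1 *: (g h - g 0).
have Hr : r @ (0:R)^' --> d by exact: derr.
have Hcs : (cs \o r) @ (0:R)^' --> cs d by apply: continuous_cvg; [exact: lin_cont | exact: Hr].
have Hct : (ct \o r) @ (0:R)^' --> ct d by apply: continuous_cvg; [exact: lin_cont | exact: Hr].
rewrite csd in Hcs; rewrite ctd in Hct.
have N1 : \forall t \near (0:R)^', (cs \o r) t < 1 := cvgr_lt _ Hcs 1 ltac:(lra).
have N2 : \forall t \near (0:R)^', -1 < (cs \o r) t := cvgr_gt _ Hcs (-1) ltac:(lra).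
have N3 : \forall t \near (0:R)^', 1/2 < (ct \o r) t := cvgr_gt _ Hct (1/2) ltac:(lra).
have [e e0 He] := near_ball _ (filterI N1 (filterI N2 N3)).
pose a := Num.min (e/2) (Num.min (del/2) (1/2)).
have a0 : 0 < a by rewrite /a !lt_min !divr_gt0 ?e0 ?del0 ?ltr01 ?ltr0n.
have ae : a < e by apply: (le_lt_trans (y := e/2)); [rewrite /a ge_min lexx | lra].
have ad : a < del by apply: (le_lt_trans (y := del/2)); [rewrite /a !ge_min lexx orbT | lra].
have a1 : a < 1 by apply: (le_lt_trans (y := 1/2)); [rewrite /a !ge_min lexx !orbT | lra].
have gq : forall h, h != 0 -> g h = g 0 + h *: r h.
  by move=> h h0; rewrite /r scalerA mulfV // scale1r addrC subrK.
have [A1 A2 A3] := Hdel a ltac:(by rewrite a0 ad).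
have ha : 0 < `|a| < e by rewrite gtr0_norm // a0 ae.
have hna : 0 < `|-a| < e by rewrite normrN gtr0_norm // a0 ae.
have [p1 [p2 p3]] := He a ha.
have [q1 [q2 q3]] := He (-a) hna.
have Cc : cs @ w --> cs w := lin_cont _ _ _ w.
have Ct : ct @ w --> ct w := lin_cont _ _ _ w.
rewrite csw in Cc; rewrite ctw in Ct.
have M1 : \forall u \near w, 1 - a/2 < cs u := cvgr_gt _ Cc (1 - a/2) ltac:(lra).
have M2 : \forall u \near w, ct u < a^2/8 := cvgr_lt _ Ct (a^2/8) ltac:(nra).
have M3 : \forall u \near w, -(a^2/8) < ct u := cvgr_gt _ Ct (-(a^2/8)) ltac:(nra).
apply: filterS (filterI M1 (filterI M2 M3)) => u [m1 [m2 m3]] xy Oxy.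
rewrite key.
have F1 := Aw xy Oxy.
have Fa : 1 <= (1 - a) * (w.1 * xy.1 - w.2 * xy.2).
  by have := A1 xy Oxy => /=; rewrite -!mulrA -mulrBr.
have Hp : 1 <= (1 + a * cs (r a)) * (w.1 * xy.1 - w.2 * xy.2) + (a * ct (r a)) * (d.1 * xy.1 - d.2 * xy.2).
  have h := A3 xy Oxy; rewrite key (gq a) ?gt_eqF // /cs /ct !linDZ -/cs -/ct g0 in h.
  by move: h; rewrite csw ctw add0r.
have Hm : 1 <= (1 + (-a) * cs (r (-a))) * (w.1 * xy.1 - w.2 * xy.2) + ((-a) * ct (r (-a))) * (d.1 * xy.1 - d.2 * xy.2).
  have h := A2 xy Oxy; rewrite key (gq (-a)) ?oppr_eq0 ?gt_eqF // /cs /ct !linDZ -/cs -/ct g0 in h.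
  by move: h; rewrite csw ctw add0r.
exact: (@arith R _ _ _ _ _ _ _ _ _ a0 a1 F1 Fa p2 p1 p3 q2 q1 q3 Hp Hm m1 m3 m2).
Qed.


Lemma near_ball0 {R : realType} (P : R -> Prop) :
  (\forall h \near (0:R), P h) -> exists2 e : R, 0 < e & forall h, `|h| < e -> P h.
Proof.
move=> /nbhs_ballP [e e0 He]; exists e => // h he; apply: He.
by rewrite /ball /= sub0r normrN.
Qed.

Lemma part2 (R : realType) (Om : set (R * R)) (w : R * R) (g : R -> R * R) :
  antipolar Om w -> C1_on_unit g -> g 0 = w -> 
     ~ good_delta Om g w -> boundary (antipolar Om) w.
Proof.
move=> Aw [Hder _] g0 Hnot; split; first exact: subset_closure.
move=> Hint; apply: Hnot.
have Hd : derivable g 0 1 by apply: Hder; rewrite ltrN10 ltr01.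
have Hc : g @ (0:R) --> w.
  rewrite -g0; apply: differentiable_continuous; exact/derivable1_diffP.
have Hl : (fun h : R => ((1 - h) * w.1, (1 - h) * w.2)) @ (0:R) --> w.
  have E : w = ((1 - 0) * w.1, (1 - 0) * w.2) by rewrite subr0 !mul1r -surjective_pairing.
  rewrite [X in _ --> X]E.
  apply: (@cvg_pair _ _ _ _ (nbhs ((1 - 0) * w.1)) (nbhs ((1 - 0) * w.2))); apply: cvgMr_tmp; apply: cvgB; (exact: cvg_cst || exact: cvg_id).
have N1 : \forall h \near (0:R), antipolar Om (g h) by exact: Hc.
have N2 : \forall h \near (0:R), antipolar Om ((1 - h) * w.1, (1 - h) * w.2) by exact: Hl.
have [e e0 He] := near_ball0 _ (filterI N1 N2).
exists e => // a /andP[a0 ae].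
have ha : `|a| < e by rewrite gtr0_norm.
have hna : `|-a| < e by rewrite normrN gtr0_norm.
have [h1 h2] := He a ha.
have [h3 _] := He (-a) hna.
by split.
Qed.

Theorem lemma3 (R : realType) (Om : set (R * R)) (w : R * R) :
  Om !=set0 -> convex_set2 Om -> closed Om -> ~ Om (0, 0) ->
  ray_property Om -> strictly_separated_from_origin Om ->
  antipolar Om w ->
  (forall g : R -> R * R, C1_on_unit g -> g 0 = w -> not_collinear ('D_1 g 0) w ->
     good_delta Om g w -> interior (antipolar Om) w) /\
  (forall g : R -> R * R, C1_on_unit g -> g 0 = w -> not_collinear ('D_1 g 0) w ->
     ~ good_delta Om g w -> boundary (antipolar Om) w).
Proof.
move=> Hne _ _ _ _ _ Aw; split.
  by move=> g Hg g0 nc gd; exact: (@part1 R Om w g Hne Aw Hg g0 nc gd).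
by move=> g Hg g0 _ ngd; exact: (@part2 R Om w g Aw Hg g0 ngd).
Qed.
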